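(* Let $a\in\{-2,-1,0,1,2\}$. As formal power series in $q$ and $x$, $$\sum_{t\geq0} \widetilde{U}_t(a,q)x^t=\prod_{n=1}^{\infty}\frac{1}{(1+aq^{2n-1}+q^{2(2n-1)})(1-q^{2n})}\cdot \left(1+2\sum_{n\geq 1}te_n\left(\frac{x+a+2}{4}\right)q^{n^2}\right).$$
   Context: For $a\in\{-2,-1,0,1,2\}$ and integer $t\geq 0$, $\widetilde{U}_t(a,q)=\sum \prod_{k=1}^t \frac{q^{n_k}}{1+aq^{n_k}+q^{2n_k}}$, where the sum runs over all $t$-tuples of odd positive integers $n_1<n_2<\cdots<n_t$ (so $\widetilde{U}_0(a,q)=1$). $T_m$ denotes the Chebyshev polynomial of the first kind, $T_m(\cos\theta)=\cos(m\theta)$, and $te_n(x):=T_{2n}(\sqrt{x})$ (a polynomial in $x$). *)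

(* Defs.v *)
From HB Require Import structures.
From mathcomp Require Import all_boot all_order all_algebra.
Set Implicit Arguments. Unset Strict Implicit. Unset Printing Implicit Defensive.
Import Order.TTheory GRing.Theory Num.Theory.
Local Open Scope ring_scope.

(* formal power series in q with coefficients in A: f k = [q^k] f *)
Definition fps (A : Type) := nat -> A.

Definition fps_of_poly {A : nzRingType} (p : {poly A}) : fps A := fun k => p`_k.

Definition fone {A : nzRingType} : fps A := fun k => (k == 0%N)%:R.

Definition fmul {A : nzRingType} (f g : fps A) : fps A :=
  fun n => \sum_(i < n.+1) f i * g (n - i)%N.

(* coefficients g_0..g_n of the multiplicative inverse of f (f 0 a unit) *)
Fixpoint finv_seq {A : unitRingType} (f : fps A) (n : nat) : seq A :=
  match n with
  | 0 => [:: (f 0%N)^-1]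
  | m.+1 => let s := finv_seq f m in
            rcons s (- (f 0%N)^-1 * \sum_(i < m.+1) f (m.+1 - i)%N * nth 0 s i)
  end.

Definition finv {A : unitRingType} (f : fps A) : fps A :=
  fun n => nth 0 (finv_seq f n) n.

(* Chebyshev polynomials of the first kind: T_0 = 1, T_1 = X,
   T_{m+2} = 2 X T_{m+1} - T_m  (so T_m(cos t) = cos(m t)) *)
Fixpoint cheb_pair (m : nat) : {poly rat} * {poly rat} :=
  match m with
  | 0 => (1, 'X)
  | m'.+1 => let (p, q) := cheb_pair m' in (q, 2%:R *: 'X * q - p)
  end.
Definition chebT (m : nat) : {poly rat} := (cheb_pair m).1.

(* te_n(x) := T_{2n}(sqrt x): T_{2n} is even, te_n collects its even coefficients *)
Definition te (n : nat) : {poly rat} := even_poly (chebT n.*2).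

Definition ufac (a : int) (n : nat) : fps rat :=
  fmul (fps_of_poly 'X^n)
       (finv (fps_of_poly (1 + a%:~R *: 'X^n + 'X^(n.*2)))).

(* [q^N] Utilde_t(a,q): sum over t-sets of odd positive integers n_1<..<n_t;
   only those with all n_k <= N contribute to the coefficient of q^N,
   since the term has q-order n_1+...+n_t. *)
Definition Ucoef (a : int) (t N : nat) : rat :=
  \sum_(S : {set 'I_N.+1} | (#|S| == t) && [forall i in S, odd i])
     (\big[fmul/fone]_(i in S) ufac a i) N.

Definition pfac (a : int) (n : nat) : fps rat :=
  fmul (finv (fps_of_poly (1 + a%:~R *: 'X^(n.*2.-1) + 'X^((n.*2.-1).*2))))
       (finv (fps_of_poly (1 - 'X^(n.*2)))).

(* infinite product prod_{n>=1} pfac a n; factors with n > N are 1 + O(q^{N+1}) *)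
Definition Pprod (a : int) : fps rat :=
  fun N => (\big[fmul/fone]_(1 <= n < N.+1) pfac a n) N.

Definition Sser (a : int) : fps {poly rat} :=
  fun N => (N == 0%N)%:R +
    2%:R * \sum_(1 <= n < N.+1 | (n * n == N)%N)
             (te n \Po ((4%:R)^-1 *: ('X + ((a + 2)%:~R)%:P))).

Definition rhs (a : int) : fps {poly rat} :=
  fun N => \sum_(i < N.+1) (Pprod a i)%:P * Sser a (N - i)%N.

(* Main.v *)
Require Import Defs.
From mathcomp Require Import all_boot all_order all_algebra.
From mathcomp Require Import zify ring lra.
Import Order.TTheory GRing.Theory Num.Theory.
Local Open Scope ring_scope.
Set Implicit Arguments. Unset Strict Implicit. Unset Printing Implicit Defensive.

Section Eqm.
Variable R : comNzRingType.
Implicit Types p r s w : {poly R}.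

Definition eqm (m : nat) p r := forall i, (i < m)%N -> p`_i = r`_i.

Lemma eqm_refl m p : eqm m p p. Proof. by []. Qed.
Lemma eqm_sym m p r : eqm m p r -> eqm m r p.
Proof. by move=> h i hi; rewrite h. Qed.
Lemma eqm_trans m p r s : eqm m p r -> eqm m r s -> eqm m p s.
Proof. by move=> h1 h2 i hi; rewrite h1 // h2. Qed.
Lemma eqm_le m m' p r : (m' <= m)%N -> eqm m p r -> eqm m' p r.
Proof. by move=> hm h i hi; apply: h; apply: leq_trans hm. Qed.
Lemma eqm_add m p p' r r' : eqm m p p' -> eqm m r r' -> eqm m (p + r) (p' + r').
Proof. by move=> h1 h2 i hi; rewrite !coefD h1 // h2. Qed.
Lemma eqm_opp m p p' : eqm m p p' -> eqm m (- p) (- p').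
Proof. by move=> h1 i hi; rewrite !coefN h1. Qed.
Lemma eqm_mul m p p' r r' : eqm m p p' -> eqm m r r' -> eqm m (p * r) (p' * r').
Proof.
move=> h1 h2 i hi; rewrite !coefM; apply: eq_bigr => j _.
have := ltn_ord j => hj; rewrite h1; last by lia.
by rewrite h2 //; lia.
Qed.
Lemma eqm_cancel m p r w : w`_0 = 1 -> eqm m (p * w) (r * w) -> eqm m p r.
Proof.
move=> w0 h i; elim: i {-2}i (leqnn i) => [|n IH] i hi him.
  move: hi; rewrite leqn0 => /eqP ->.
  by have := h 0%N (leq_ltn_trans (leq0n _) him); rewrite !coef0M w0 !mulr1.
have := h i him; rewrite !coefM !big_ord_recr /= !subnn w0 !mulr1.
rewrite (eq_bigr (fun j : 'I_i => r`_j * w`_(i - j))); first by move/addrI.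
move=> j _; have hj := ltn_ord j; rewrite IH //; lia.
Qed.
Lemma eqm_unit m v d : eqm m (v * d) 1 -> eqm m d 1 -> eqm m v 1.
Proof.
move=> h1 h2; apply: eqm_trans _ h1.
by rewrite -{1}(mulr1 v); apply: eqm_mul => //; apply: eqm_sym.
Qed.
Lemma eqm_prod m (I : Type) (rr : seq I) (P : pred I) (F G : I -> {poly R}) :
  (forall i, P i -> eqm m (F i) (G i)) ->
  eqm m (\prod_(i <- rr | P i) F i) (\prod_(i <- rr | P i) G i).
Proof.
move=> h; apply: (big_ind2 (fun x y => eqm m x y)) => //.
by move=> ? ? ? ? ? ?; apply: eqm_mul.
Qed.
Lemma eqm_prod1 m (I : Type) (rr : seq I) (P : pred I) (F : I -> {poly R}) :
  (forall i, P i -> eqm m (F i) 1) -> eqm m (\prod_(i <- rr | P i) F i) 1.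
Proof.
move=> h; apply: (big_ind (fun x => eqm m x 1)) => //.
by move=> x y hx hy; rewrite -(mulr1 1); apply: eqm_mul.
Qed.
Lemma eqm_Xn m n : (m <= n)%N -> eqm m 'X^n 0.
Proof. move=> h i hi; rewrite coefXn coef0; case: eqP => // E; move: hi; lia. Qed.
Lemma eqm_mulXn m e A : eqm m A 1 -> eqm (m + e) (A * 'X^e) 'X^e.
Proof.
move=> h i hi; rewrite coefMXn coefXn; case: ltnP => hie.
  by case: eqP => // E; move: hie; rewrite E ltnn.
rewrite h; last by move: hi hie; lia.
rewrite coef1; congr (_%:R); apply/eqP/eqP; lia.
Qed.
End Eqm.

Section FR.
Variable K : comNzRingType.
Definition fr (N : nat) (f : fps K) (p : {poly K}) := forall k, (k <= N)%N -> f k = p`_k.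
Definition tp (N : nat) (f : fps K) : {poly K} := \poly_(i < N.+1) f i.

Lemma fr_tp N f : fr N f (tp N f).
Proof. by move=> k hk; rewrite coef_poly ltnS hk. Qed.
Lemma fr_one N : fr N fone 1.
Proof. by move=> k _; rewrite coef1. Qed.
Lemma fr_poly N p : fr N (fps_of_poly p) p.
Proof. by []. Qed.
Lemma fr_mul N f g p r : fr N f p -> fr N g r -> fr N (fmul f g) (p * r).
Proof.
move=> h1 h2 k hk; rewrite /fmul coefM; apply: eq_bigr => i _.
have hi := ltn_ord i; rewrite h1; last by lia.
by rewrite h2 //; lia.
Qed.
Lemma fr_eqm N f p r : fr N f p -> fr N f r -> eqm N.+1 p r.
Proof. by move=> h1 h2 i hi; rewrite -h1 ?h2. Qed.
Lemma fr_eqm' N f p r : fr N f p -> eqm N.+1 p r -> fr N f r.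
Proof. by move=> h1 h2 i hi; rewrite h1 ?h2. Qed.
Lemma fr_big N (I : Type) (rr : seq I) (P : pred I) (F : I -> fps K) (G : I -> {poly K}) :
  (forall i, P i -> fr N (F i) (G i)) ->
  fr N (\big[fmul/fone]_(i <- rr | P i) F i) (\prod_(i <- rr | P i) G i).
Proof.
move=> h; apply: (big_ind2 (fr N)) => //; first exact: fr_one.
by move=> ? ? ? ? ? ?; apply: fr_mul.
Qed.
End FR.

Section Finv.
Variable K : comUnitRingType.

Lemma finv_seq_nth (f : fps K) n i : (i <= n)%N -> nth 0 (finv_seq f n) i = Defs.finv f i.
Proof.
have sz : forall m, size (finv_seq f m) = m.+1.
  by elim=> [|m IH] //=; rewrite size_rcons IH.
elim: n i => [|n IH] i hi; first by move: hi; rewrite leqn0 => /eqP ->.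
case: (ltnP i n.+1) => h; last first.
  by have -> : i = n.+1 by lia.
by rewrite /= nth_rcons sz h IH.
Qed.

Lemma finvS (f : fps K) m :
  Defs.finv f m.+1 = - (f 0%N)^-1 * \sum_(i < m.+1) f (m.+1 - i)%N * Defs.finv f i.
Proof.
have sz : forall m, size (finv_seq f m) = m.+1.
  by elim=> [|k IH] //=; rewrite size_rcons IH.
rewrite /Defs.finv /= nth_rcons sz ltnn eqxx; congr (_ * _); apply: eq_bigr => i _.
by rewrite finv_seq_nth // -ltnS.
Qed.

Lemma fmul_finv (f : fps K) : f 0%N = 1 -> forall n, fmul (Defs.finv f) f n = fone n.
Proof.
move=> f0 [|n].
  by rewrite /fmul big_ord1 /fone /= /Defs.finv /= f0 invr1 mul1r.
rewrite /fmul big_ord_recr /= subnn f0 mulr1 finvS f0 invr1 mulN1r.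
rewrite /fone /=; apply/eqP; rewrite subr_eq0; apply/eqP.
apply: eq_bigr => i _; by rewrite mulrC.
Qed.
End Finv.

Section QB.
Variable R : comNzRingType.

Fixpoint qb (n k : nat) : {poly R} :=
  match n with
  | 0 => (k == 0%N)%:R
  | n'.+1 => match k with 0 => 1 | k'.+1 => qb n' k' + 'X^(k.*2) * qb n' k end
  end.

Definition qpoch (n : nat) : {poly R} := \prod_(i < n) (1 - 'X^(i.+1.*2)).

Lemma qb_n0 n : qb n 0 = 1. Proof. by case: n. Qed.
Lemma qbS n k : qb n.+1 k.+1 = qb n k + 'X^(k.+1.*2) * qb n k.+1. Proof. by []. Qed.

Lemma qb_gt n k : (n < k)%N -> qb n k = 0.
Proof.
elim: n k => [|n IH] [|k] //= h.
rewrite IH // IH ?mulr0 ?addr0 //; lia.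
Qed.

Lemma qbB n k : qb n.+1 k.+1 = 'X^((n-k).*2) * qb n k + qb n k.+1.
Proof.
elim: n k => [|n IH] [|k].
- by rewrite /= mulr0 !addr0 expr0 mul1r.
- by rewrite /= mulr0 addr0 mulr0 add0r.
- rewrite (qbS n.+1 0) [in LHS](IH 0%N) (qbS n 0) !qb_n0 !subn0 !mulr1.
  rewrite !mulrDr -exprD.
  have -> : (1.*2 + n.*2 = n.+1.*2)%N by lia.
  ring.
- rewrite (qbS n.+1 k.+1) [in LHS]IH [in LHS]IH subSS.
  rewrite [in RHS]qbS [in RHS]qbS.
  case: (ltnP n k.+1) => hk.
    rewrite (qb_gt (n:=n) (k:=k.+1)) // (qb_gt (n:=n) (k:=k.+2)) 1?ltnW //.
    by rewrite !(mulr0, addr0).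
  rewrite (mulrDr 'X^((n - k).*2)) mulrA -exprD.
  have -> : ((n - k).*2 + k.+1.*2 = n.+1.*2)%N by lia.
  rewrite (mulrDr 'X^(k.+2.*2)) mulrA -exprD.
  have -> : (k.+2.*2 + (n - k.+1).*2 = n.+1.*2)%N by lia.
  ring.
Qed.

Lemma qb21 n : qb n.+2 1 = 1 + 'X^(n.+1.*2) + 'X^2 * qb n 1.
Proof.
rewrite (qbS n.+1 0) (qbB n 0) !qb_n0 subn0 mulr1 mulrDr -exprD.
have -> : (2 + n.*2 = n.+1.*2)%N by lia.
by rewrite addrA.
Qed.

Lemma qb2 n i : qb n.+2 i.+2 =
  'X^((n-i).*2) * qb n i + (1 + 'X^((n.+1).*2)) * qb n i.+1 + 'X^((i.+2).*2) * qb n i.+2.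
Proof.
rewrite qbB subSS !qbS.
case: (ltnP n i.+1) => hk.
  rewrite (qb_gt (n:=n) (k:=i.+1)) // (qb_gt (n:=n) (k:=i.+2)) 1?ltnW //.
  by rewrite !(mulr0, addr0).
rewrite (mulrDr 'X^((n - i).*2)) mulrA -exprD.
have -> : ((n - i).*2 + (i.+1).*2 = (n.+1).*2)%N by lia.
ring.
Qed.

Lemma qpochS n : qpoch n.+1 = qpoch n * (1 - 'X^(n.+1.*2)).
Proof. by rewrite /qpoch big_ord_recr. Qed.

Lemma qb_prod n k : (k <= n)%N -> qb n k * qpoch k * qpoch (n - k) = qpoch n.
Proof.
elim: n k => [|n IH] [|k] hk.
- by rewrite /qpoch !big_ord0 !mulr1.
- by [].
- by rewrite qb_n0 /qpoch big_ord0 !mul1r subn0.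
- have h1 := IH k hk.
  rewrite qbS subSS qpochS [qpoch n.+1]qpochS.
  case: (ltnP k n) => hkn.
    have h2 := IH k.+1 hkn.
    have q2 : qpoch (n - k) = qpoch (n - k.+1) * (1 - 'X^((n - k).*2)).
      have e : (n - k = (n - k.+1).+1)%N by lia.
      by rewrite {1}e qpochS -e.
    have ex : 'X^(k.+1.*2) * 'X^((n - k).*2) = 'X^(n.+1.*2) :> {poly R}.
      by rewrite -exprD; congr ('X^_); lia.
    transitivity (qb n k * qpoch k * qpoch (n - k) * (1 - 'X^(k.+1.*2)) +
      'X^(k.+1.*2) * (qb n k.+1 * (qpoch k * (1 - 'X^(k.+1.*2))) * qpoch (n - k.+1))
        * (1 - 'X^((n - k).*2))).
      by rewrite q2; ring.
    rewrite h1 -qpochS h2 -ex; ring.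
  have e : k = n by lia.
  subst k; rewrite (qb_gt (n:=n) (k:=n.+1)) // mulr0 addr0 subnn.
  rewrite subnn in h1; rewrite -[in RHS]h1; ring.
Qed.
End QB.

Lemma sum_ext0 (V : nmodType) (f : nat -> V) n m : (n <= m)%N ->
  (forall i, (n <= i)%N -> f i = 0) ->
  \sum_(0 <= i < m) f i = \sum_(0 <= i < n) f i.
Proof.
move=> hnm hf; rewrite (big_cat_nat (n:=n)) /=; last by []; last by [].

rewrite [X in _ + X](_ : _ = 0) ?addr0 //.
by rewrite big_nat_cond big1 // => i /andP [/andP [hi _] _]; apply: hf.
Qed.

Section JTP.
Variable R : comNzRingType.
Variable u : R.

Fixpoint Fp (n : nat) : R :=
  match n with 0 => 2%:R | 1 => u | (m.+1 as m1).+1 => u * Fp m1 - Fp m end.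

Lemma FpS n : u * Fp n.+1 = Fp n.+2 + Fp n.
Proof. by rewrite [Fp n.+2]/= addrNK. Qed.
Lemma Fp0 : u * Fp 0 = Fp 1 + Fp 1.
Proof. by rewrite /= mulr_natr mulr2n. Qed.

Definition dd (M i : nat) : nat := (i - M + (M - i))%N.
Definition cc (M i : nat) : {poly R} := qb R M.*2 i * 'X^(dd M i ^ 2).
Definition Gf (M i : nat) : R := Fp (dd M i).
Definition fac (j : nat) : {poly R} := 1 + u%:P * 'X^(j.*2.+1) + 'X^((j.*2.+1).*2).
Definition PM (M : nat) : {poly R} := \prod_(j < M) fac j.

Lemma Gf_shift M i : Gf M i = Gf M.+1 i.+1.
Proof. by rewrite /Gf /dd !subSS. Qed.

Lemma Gf_rec M i : u * Gf M.+1 i.+1 = Gf M.+1 i.+2 + Gf M.+1 i.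
Proof.
rewrite /Gf.
case: (ltngtP i M) => h.
- have -> : dd M.+1 i.+1 = (M - i.+1).+1 by rewrite /dd; lia.
  rewrite FpS addrC; congr (Fp _ + Fp _); rewrite /dd; lia.
- have -> : dd M.+1 i.+1 = (i - M.+1).+1 by rewrite /dd; lia.
  rewrite FpS; congr (Fp _ + Fp _); rewrite /dd; lia.
- subst i; have -> : dd M.+1 M.+1 = 0%N by rewrite /dd; lia.
  rewrite Fp0; congr (Fp _ + Fp _); rewrite /dd; lia.
Qed.

Lemma cc_gt M i : (M.*2 < i)%N -> cc M i = 0.
Proof. by move=> h; rewrite /cc qb_gt // mul0r. Qed.

Lemma cc0 M : cc M.+1 0 = 'X^(M.*2.+1) * cc M 0.
Proof.
rewrite /cc !qb_n0 !mul1r -exprD; congr ('X^_); rewrite /dd.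
have -> : (0 - M.+1 + (M.+1 - 0) = M.+1)%N by lia.
have -> : (0 - M + (M - 0) = M)%N by lia.
rewrite !expnS expn0; lia.
Qed.

Lemma cc1 M : cc M.+1 1 = (1 + 'X^((M.*2.+1).*2)) * cc M 0 + 'X^(M.*2.+1) * cc M 1.
Proof.
rewrite /cc doubleS qb21 qb_n0 mul1r.
case: M => [|M].
  rewrite /dd /= !subnn /=.
  by rewrite !(mulr0, mul0r, addr0, expr0, mulr1).
have -> : dd M.+2 1 = M.+1 by rewrite /dd; lia.
have -> : dd M.+1 0 = M.+1 by rewrite /dd; lia.
have -> : dd M.+1 1 = M by rewrite /dd; lia.
have -> : 'X^(M.+1.*2.+1) * (qb R M.+1.*2 1 * 'X^(M ^ 2)) =
   qb R M.+1.*2 1 * ('X^2 * 'X^(M.+1 ^ 2)).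
  rewrite mulrCA -!exprD; congr (_ * 'X^_); rewrite !expnS expn0; lia.
ring.
Qed.
Lemma cc2 M i : cc M.+1 i.+2 = 'X^(M.*2.+1) * cc M i +
  (1 + 'X^((M.*2.+1).*2)) * cc M i.+1 + 'X^(M.*2.+1) * cc M i.+2.
Proof.
case: (ltnP M.*2 i) => h.
  by rewrite !cc_gt ?(mulr0, addr0) //; lia.
rewrite /cc doubleS qb2.
have E2 : dd M.+1 i.+2 = dd M i.+1 by rewrite /dd; lia.
rewrite E2.
have -> : 'X^(M.*2.+1) * (qb R M.*2 i * 'X^(dd M i ^ 2)) =
   qb R M.*2 i * ('X^((M.*2 - i).*2) * 'X^(dd M i.+1 ^ 2)).
  rewrite mulrCA -!exprD; congr (_ * 'X^_); rewrite /dd !expnS !expn0; nia.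
have -> : 'X^(M.*2.+1) * (qb R M.*2 i.+2 * 'X^(dd M i.+2 ^ 2)) =
   qb R M.*2 i.+2 * ('X^(i.+2.*2) * 'X^(dd M i.+1 ^ 2)).
  rewrite mulrCA -!exprD; congr (_ * 'X^_); rewrite /dd !expnS !expn0; nia.
ring.
Qed.

Definition shc (M i : nat) : {poly R} :=
  'X^(M.*2.+1) * (if i is j.+2 then cc M j else 0) +
  (1 + 'X^((M.*2.+1).*2)) * (if i is j.+1 then cc M j else 0) + 'X^(M.*2.+1) * cc M i.

Lemma cc_shc M i : cc M.+1 i = shc M i.
Proof.
case: i => [|[|i]]; rewrite /shc.
- by rewrite cc0 !mulr0 !add0r.
- by rewrite cc1 mulr0 add0r.
- exact: cc2.
Qed.

Lemma JTP_PM M :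
  2%:R * PM M = \sum_(0 <= i < M.*2.+1) cc M i * (Gf M i)%:P.
Proof.
elim: M => [|M IH].
  rewrite /PM big_ord0 mulr1 big_nat1 /cc /Gf /dd /= mul1r expr0 mul1r.
  by rewrite polyC_natr.
rewrite /PM big_ord_recr /= -/(PM M) mulrA IH big_distrl /=.
set Ca : {poly R} := 'X^(M.*2.+1).
set Cb : {poly R} := 1 + 'X^((M.*2.+1).*2).
have hfac : fac M = Cb + u%:P * Ca by rewrite /fac /Cb /Ca; ring.
pose Gp j := (Gf M.+1 j)%:P.
transitivity (\sum_(0 <= i < M.*2.+1) (cc M i * Cb * Gp i.+1 + cc M i * Ca * Gp i.+2
    + cc M i * Ca * Gp i)).
  apply: eq_bigr => i _; rewrite hfac Gf_shift.
  have key : (Gf M.+1 i.+1)%:P * (Cb + u%:P * Ca) = Cb * Gp i.+1 + Ca * (Gp i.+2 + Gp i).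
    by rewrite /Gp -polyCD -Gf_rec polyCM; ring.
  rewrite -mulrA key; ring.
rewrite !big_split /=.
transitivity (\sum_(0 <= i < (M.*2.+1).+2) (Ca * (if i is j.+2 then cc M j else 0) * Gp i
   + Cb * (if i is j.+1 then cc M j else 0) * Gp i + Ca * cc M i * Gp i)); last first.
  rewrite doubleS; apply: eq_bigr => i _; rewrite cc_shc /shc /Gp -/Ca -/Cb; ring.
rewrite !big_split /=.
have sw : forall a b c : {poly R}, a + b + c = b + a + c by move=> *; ring.
rewrite sw; congr (_ + _ + _).
- rewrite [in RHS]big_nat_recl // [in RHS]big_nat_recl //=.
  rewrite !mulr0 !mul0r !add0r; apply: eq_bigr => i _; ring.
- rewrite [in RHS]big_nat_recl //= mulr0 mul0r add0r.
  rewrite [in RHS](sum_ext0 (n := M.*2.+1)); [|lia|by move=> i hi; rewrite cc_gt ?mulr0 ?mul0r].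
  apply: eq_bigr => i _; ring.
- rewrite [in RHS](sum_ext0 (n := M.*2.+1)); [|lia|by move=> i hi; rewrite cc_gt ?mulr0 ?mul0r].
  apply: eq_bigr => i _; ring.
Qed.
End JTP.

Section E.
Variable R : comNzRingType.
Variable u : R.

Lemma qpoch0 j : (qpoch R j)`_0 = 1.
Proof.
elim: j => [|j IH]; first by rewrite /qpoch big_ord0 coef1.
by rewrite qpochS coef0M IH coefB coef1 coefXn /= subr0 mulr1.
Qed.

Lemma qpoch_eqm j j' : (j <= j')%N -> eqm (j.+1.*2) (qpoch R j') (qpoch R j).
Proof.
move=> h; elim: j' h => [|j' IH] h.
  by move: h; rewrite leqn0 => /eqP ->.
case: (ltnP j j'.+1) => h2; last first.
  by have -> : j = j'.+1 by lia.
rewrite qpochS -[qpoch R j]mulr1; apply: eqm_mul; first by apply: IH; lia.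
rewrite -[1 in X in eqm _ _ X]subr0; apply: eqm_add => //; apply: eqm_opp.
by apply: eqm_Xn; lia.
Qed.

Lemma cc_eqm N i : (i <= N.*2)%N ->
  eqm N.+1 (qpoch R N * cc R N i) 'X^(dd N i ^ 2).
Proof.
move=> hi; set s := dd N i.
have hs : (s <= N)%N by rewrite /s /dd; lia.
set m := (N - s).+1.*2.
set w := qpoch R (N - s).
have hp := qb_prod R hi.
have e1 : eqm m (qpoch R i) w by apply: qpoch_eqm; rewrite /s /dd; lia.
have e2 : eqm m (qpoch R (N.*2 - i)) w by apply: qpoch_eqm; rewrite /s /dd; lia.
have e3 : eqm m (qpoch R N.*2) w by apply: qpoch_eqm; lia.
have e4 : eqm m (qpoch R N) w by apply: qpoch_eqm; lia.
have key : eqm m (qpoch R N * qb R N.*2 i) 1.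
  apply: (@eqm_cancel _ _ _ _ (w * w)); first by rewrite coef0M qpoch0 mulr1.
  apply: (@eqm_trans _ _ _ (qpoch R N * qb R N.*2 i * (qpoch R i * qpoch R (N.*2 - i)))).
    by apply: eqm_mul => //; apply: eqm_mul; apply: eqm_sym.
  have -> : qpoch R N * qb R N.*2 i * (qpoch R i * qpoch R (N.*2 - i)) =
    qpoch R N * (qb R N.*2 i * qpoch R i * qpoch R (N.*2 - i)) by ring.
  by rewrite hp mul1r; apply: eqm_mul.
have := eqm_mulXn (e := (s ^ 2)%N) key.
rewrite /cc mulrA; apply: eqm_le; rewrite /m !expnS expn0; nia.
Qed.

Lemma JTP_coef N k : (k <= N)%N ->
  2%:R * (qpoch R N * PM u N)`_k =
  \sum_(0 <= i < N.*2.+1) (k == (dd N i ^ 2)%N)%:R * Gf u N i.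
Proof.
move=> hk; rewrite -coefCM polyC_natr mulrCA JTP_PM mulr_sumr coef_sum.
apply: eq_big_nat => i /andP [_ hi].
rewrite mulrA coefMC cc_eqm; [|lia|lia].
by rewrite coefXn.
Qed.
End E.

Lemma chebT2 m : (cheb_pair m).2 = chebT m.+1.
Proof. by rewrite /chebT /=; case: (cheb_pair m). Qed.

Lemma chebT_rec m : chebT m.+2 = 2%:R * 'X * chebT m.+1 - chebT m.
Proof.
rewrite -chebT2 /= -chebT2.
rewrite /chebT; case: (cheb_pair m) => p q /=.
by rewrite -mul_polyC polyC_natr.
Qed.

Lemma chebT0 : chebT 0 = 1. Proof. by []. Qed.
Lemma chebT1 : chebT 1 = 'X. Proof. by []. Qed.

Lemma chebT_rec4 m : chebT m.+4 = 2%:R * chebT 2 * chebT m.+2 - chebT m.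
Proof.
rewrite (chebT_rec m.+2) (chebT_rec m.+1) (chebT_rec m) (chebT_rec 0) chebT0 chebT1.
ring.
Qed.

Lemma chebT_double n : chebT n.*2 = chebT n \Po chebT 2.
Proof.
suff : chebT n.*2 = chebT n \Po chebT 2 /\ chebT n.+1.*2 = chebT n.+1 \Po chebT 2 by case.
elim: n => [|n [IH1 IH2]].
  by rewrite chebT0 comp_polyC chebT1 comp_polyX.
split => //.
have -> : (n.+2.*2 = (n.*2).+4)%N by rewrite !doubleS.
rewrite chebT_rec4 -doubleS IH1 IH2 (chebT_rec n).
by rewrite comp_polyB comp_polyM comp_polyM comp_polyX -polyC_natr comp_polyC.
Qed.

Lemma even_poly_compX2 (p : {poly rat}) : even_poly (p \Po 'X^2) = p.
Proof.
apply/polyP => i; rewrite coef_even_poly coef_comp_poly_Xn //.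
by rewrite -muln2 dvdn_mull // mulnK.
Qed.

Lemma te_comp n : te n = chebT n \Po (2%:R * 'X - 1).
Proof.
rewrite /te chebT_double.
have -> : chebT 2 = (2%:R * 'X - 1) \Po 'X^2.
  rewrite (chebT_rec 0) chebT0 chebT1 comp_polyB comp_polyM comp_polyX -polyC_natr comp_polyC.
  by rewrite comp_polyC mulrA.
by rewrite comp_polyA even_poly_compX2.
Qed.

Lemma cheb_Fp (u : {poly rat}) n :
  2%:R * (chebT n \Po (2%:R^-1 *: u)) = Fp u n.
Proof.
set v := 2%:R^-1 *: u.
have hv : 2%:R * v = u.
  by rewrite /v -mul_polyC mulrA -polyC_natr -polyCM mulfV ?mul1r // pnatr_eq0.
suff : 2%:R * (chebT n \Po v) = Fp u n /\ 2%:R * (chebT n.+1 \Po v) = Fp u n.+1 by case.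
elim: n => [|n [IH1 IH2]].
  by rewrite chebT0 chebT1 comp_polyX hv -polyC1 comp_polyC polyC1 mulr1.
split => //.
rewrite chebT_rec comp_polyB !comp_polyM comp_polyX -polyC_natr comp_polyC polyC_natr.
have -> : Fp u n.+2 = u * Fp u n.+1 - Fp u n by [].
rewrite -IH1 -IH2 -hv; ring.
Qed.

Lemma te_Fp (a : int) n :
  2%:R * (te n \Po (4%:R^-1 *: ('X + ((a + 2)%:~R)%:P))) = Fp ('X + (a%:~R)%:P) n.
Proof.
rewrite te_comp -comp_polyA -cheb_Fp; congr (_ * (_ \Po _)).
rewrite comp_polyB comp_polyM comp_polyX -polyC_natr comp_polyC -polyC1 comp_polyC.
have L : forall c d : rat, c *: ('X + d%:P) = c%:P * 'X + (c * d)%:P.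
  by move=> c d; rewrite -mul_polyC mulrDr polyCM.
rewrite !L mulrDr mulrA -!polyCM -addrA -polyCB.
congr (_%:P * 'X + _%:P); by rewrite ?intrD; field.
Qed.

Lemma sum_dd (V : nmodType) (h : nat -> V) N :
  \sum_(0 <= i < N.*2.+1) h (dd N i) =
  h 0%N + \sum_(0 <= n < N) h n.+1 + \sum_(0 <= n < N) h n.+1.
Proof.
rewrite (big_cat_nat (n := N)) //=; last by lia.
have hA : \sum_(0 <= i < N) h (dd N i) = \sum_(0 <= n < N) h n.+1.
  rewrite big_nat_rev /=; apply: eq_big_nat => i /andP [_ hi]; congr (h _).
  rewrite /dd; lia.
have hB : \sum_(N <= i < N.*2.+1) h (dd N i) = h 0%N + \sum_(0 <= n < N) h n.+1.
  have -> : \sum_(N <= i < N.*2.+1) h (dd N i) = \sum_(0 <= i < N.+1) h (dd N (i + N)).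
    rewrite -{1}[N]add0n big_addn.
    by have -> : (N.*2.+1 - N = N.+1)%N by lia.
  rewrite big_nat_recl //= add0n.
  have -> : dd N N = 0%N by rewrite /dd; lia.
  congr (_ + _); apply: eq_big_nat => i _; congr (h _); rewrite /dd; lia.
by rewrite hA hB addrCA addrA.
Qed.

Lemma G_Sser (a : int) N k : (k <= N)%N ->
  (qpoch {poly rat} N * PM ('X + (a%:~R)%:P) N)`_k = Sser a k.
Proof.
move=> hk; apply: (@mulfI _ 2%:R); first by rewrite -polyC_natr polyC_eq0 pnatr_eq0.
rewrite JTP_coef //.
set u := 'X + (a%:~R)%:P.
rewrite /Gf.
rewrite (sum_dd (fun n => (k == (n ^ 2)%N)%:R * Fp u n)) /Sser.
have hS : \sum_(0 <= n < N) (k == (n.+1 ^ 2)%N)%:R * Fp u n.+1 =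
  2%:R * \sum_(1 <= n < k.+1 | (n * n)%N == k)
      (te n \Po 4%:R^-1 *: ('X + ((a + 2)%:~R)%:P)).
  rewrite mulr_sumr [in RHS](eq_bigr (fun n => Fp u n)); last by move=> n _; rewrite te_Fp.
  rewrite [in RHS]big_mkcond [in RHS]big_add1 succnK.
  rewrite (sum_ext0 (n := k)); [|lia|].
    apply: eq_big_nat => i _; rewrite -mulnn eq_sym.
    by case: eqP => _; rewrite ?mul1r ?mul0r.
  move=> i hi; have -> : (k == (i.+1 ^ 2)%N) = false by apply/eqP; nia.
  by rewrite mul0r.
rewrite hS; have -> : Fp u 0 = 2%:R by [].
rewrite exp0n //; ring.
Qed.

Notation lft := (map_poly (@polyC rat)).

Lemma eqm_map m (p r : {poly rat}) : eqm m p r -> eqm m (lft p) (lft r).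
Proof. by move=> h i hi; rewrite !coef_map h. Qed.

Lemma eqm_scale0 (R : comNzRingType) m (c : R) (p : {poly R}) : eqm m p 0 -> eqm m (c *: p) 0.
Proof. by move=> h i hi; rewrite coefZ h // coef0 mulr0. Qed.

Section Main.
Variables (a : int) (N : nat).

Definition D i : {poly rat} := 1 + a%:~R *: 'X^i + 'X^(i.*2).
Definition V i := tp N (Defs.finv (fps_of_poly (D i))).
Definition U i := tp N (ufac a i).
Definition W n := tp N (Defs.finv (fps_of_poly (1 - 'X^(n.*2) : {poly rat}))).
Definition Pf n := tp N (pfac a n).

Lemma fr_finv (p : {poly rat}) : p`_0 = 1 ->
  eqm N.+1 (tp N (Defs.finv (fps_of_poly p)) * p) 1.
Proof.
move=> h; apply: (@fr_eqm _ N (fmul (Defs.finv (fps_of_poly p)) (fps_of_poly p))).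
  by apply: fr_mul; [exact: fr_tp | exact: fr_poly].
by move=> k hk; rewrite fmul_finv //; exact: fr_one.
Qed.

Lemma hV i : (0 < i)%N -> eqm N.+1 (V i * D i) 1.
Proof.
move=> hi; apply: fr_finv.
rewrite /D !coefD coefZ !coefXn coef1 /=.
have -> : (0 == i)%N = false by apply/eqP; lia.
have -> : (0 == i.*2)%N = false by apply/eqP; lia.
by rewrite mulr0 !addr0.
Qed.

Lemma hW n : (0 < n)%N -> eqm N.+1 (W n * (1 - 'X^(n.*2))) 1.
Proof.
move=> hn; apply: fr_finv.
rewrite coefB coefXn coef1 /=.
have -> : (0 == n.*2)%N = false by apply/eqP; lia.
by rewrite subr0.
Qed.

Lemma hU i : eqm N.+1 (U i) ('X^i * V i).
Proof.
apply: (@fr_eqm _ N (ufac a i)); first exact: fr_tp.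
by apply: fr_mul; [exact: fr_poly | exact: fr_tp].
Qed.

Lemma hPf n : eqm N.+1 (Pf n) (V (n.*2.-1) * W n).
Proof.
apply: (@fr_eqm _ N (pfac a n)); first exact: fr_tp.
by apply: fr_mul; exact: fr_tp.
Qed.

Lemma eqm_D1 i m : (m <= i)%N -> eqm m (D i) 1.
Proof.
move=> h; rewrite -[1 in X in eqm _ _ X]addr0 -[1 in X in eqm _ _ X]addr0.
apply: eqm_add; [apply: eqm_add => //; apply: eqm_scale0|]; apply: eqm_Xn; lia.
Qed.

Lemma V1 i m : (0 < i)%N -> (m <= i)%N -> (m <= N.+1)%N -> eqm m (V i) 1.
Proof.
move=> h1 h2 h3; apply: (@eqm_unit _ _ _ (D i)); last exact: eqm_D1.
exact: eqm_le (hV h1).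
Qed.

Lemma W1 n m : (0 < n)%N -> (m <= n.*2)%N -> (m <= N.+1)%N -> eqm m (W n) 1.
Proof.
move=> h1 h2 h3; apply: (@eqm_unit _ _ _ (1 - 'X^(n.*2))).
  exact: eqm_le (hW h1).
rewrite -[1 in X in eqm _ _ X]subr0; apply: eqm_add => //; apply: eqm_opp.
apply: eqm_Xn; lia.
Qed.

Definition Pp := \prod_(1 <= n < N.+1) Pf n.

Lemma Pprod_coef i : (i <= N)%N -> Pprod a i = Pp`_i.
Proof.
move=> hi.
have h1 := @fr_big _ N _ (index_iota 1 i.+1) xpredT _ _ (fun n _ => @fr_tp _ N (pfac a n)).
rewrite /Pprod h1 //.
have : eqm i.+1 (\prod_(1 <= n < i.+1) Pf n) Pp.
  rewrite /Pp [X in eqm _ _ X](big_cat_nat (n := i.+1)) //=.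
  rewrite -{1}[\prod_(1 <= n < i.+1) Pf n]mulr1; apply: eqm_mul => //.
  apply: eqm_sym; rewrite big_nat_cond; apply: eqm_prod1 => n /andP [/andP [hn1 hn2] _].
  apply: (@eqm_trans _ _ _ (V (n.*2.-1) * W n)).
    by apply: (eqm_le _ (hPf n)); lia.
  rewrite -(mulr1 1); apply: eqm_mul; [apply: V1 | apply: W1]; lia.
by apply.
Qed.

Definition Ss : {poly {poly rat}} := \poly_(k < N.+1) Sser a k.

Lemma rhs_coef : rhs a N = (lft Pp * Ss)`_N.
Proof.
rewrite /rhs coefM; apply: eq_bigr => i _.
have hi := ltn_ord i.
rewrite coef_map coef_poly Pprod_coef; last by lia.
by have -> : (N - i < N.+1)%N by lia.
Qed.


Lemma Ucoef_L t : Ucoef a t N =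
  ((\prod_(i : 'I_N.+1 | odd i) (1 + ('X)%:P * lft (U i)))`_N)`_t.
Proof.
set x : {poly {poly rat}} := ('X)%:P.
rewrite big_mkcond /=.
rewrite (eq_bigr (fun i : 'I_N.+1 => (if odd i then x * lft (U i) else 0) + 1)); last first.
  by move=> i _; case: (odd i); rewrite ?add0r // addrC.
rewrite bigA_distr !coef_sum /Ucoef big_mkcond /=; apply: eq_bigr => S _.
rewrite -big_mkcond /=.
rewrite (@fr_big _ N _ _ _ _ _ (fun (i : 'I_N.+1) _ => @fr_tp _ N (ufac a i)) N (leqnn N)).
case: (boolP [forall i in S, odd i]) => hS; last first.
  move/forall_inPn: hS => [i hiS hodd].
  rewrite andbF (bigD1 i hiS) /= (negbTE hodd) mul0r.
  by rewrite coef0 coef0.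
rewrite andbT.
have -> : \prod_(i in S) (if odd i then x * lft (U i) else 0) =
    (('X ^+ #|S|)%:P) * lft (\prod_(i in S) U i).
  rewrite rmorph_prod polyC_exp -prodr_const -big_split /=.
  by apply: eq_bigr => i hi; rewrite (forall_inP hS i hi).
rewrite coefCM coef_map coefMC coefXn eq_sym.
by case: eqP; rewrite ?mul1r ?mul0r.
Qed.


Lemma prod_odd (R : comNzRingType) (F : nat -> {poly R}) M :
  \prod_(0 <= i < M.*2.+1 | odd i) F i = \prod_(0 <= j < M) F (j.*2.+1).
Proof.
rewrite big_mkcond /=.
elim: M => [|M IH]; first by rewrite big_nat1 /= big_geq.
rewrite doubleS big_nat_recr //= big_nat_recr //= IH big_nat_recr //=.
by rewrite odd_double /= mulr1.
Qed.

Definition uu : {poly rat} := 'X + (a%:~R)%:P.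
Definition Fl (i : nat) : {poly {poly rat}} := 1 + ('X)%:P * lft (U i).

Lemma Fl_big i : (N < i)%N -> eqm N.+1 (Fl i) 1.
Proof.
move=> hi; rewrite -[1 in X in eqm _ _ X]addr0; apply: eqm_add => //.
rewrite -(mulr0 ('X)%:P); apply: eqm_mul => //.
rewrite -(rmorph0 (map_poly (@polyC rat))); apply: eqm_map.
apply: eqm_trans (hU i) _; rewrite -(mul0r (V i)); apply: eqm_mul => //.
by apply: eqm_Xn.
Qed.

Lemma Fl_fac j : eqm N.+1 (Fl j.*2.+1) (lft (V j.*2.+1) * fac uu j).
Proof.
set i := j.*2.+1.
have h1 : eqm N.+1 (lft (V i) * lft (D i)) 1.
  by rewrite -rmorphM -(rmorph1 (map_poly (@polyC rat))); apply: eqm_map; apply: hV.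
have h2 : eqm N.+1 (lft (U i)) ('X^i * lft (V i)).
  by rewrite -(map_polyXn (@polyC rat)) -rmorphM; apply: eqm_map; apply: hU.
apply: (@eqm_trans _ _ _ (lft (V i) * lft (D i) + ('X)%:P * ('X^i * lft (V i)))).
  rewrite /Fl; apply: eqm_add; [exact: eqm_sym | by apply: eqm_mul].
have -> : fac uu j = lft (D i) + ('X)%:P * 'X^i.
  have e : lft (D i) = 1 + ((a%:~R)%:P)%:P * 'X^i + 'X^(i.*2).
    by rewrite /D -mul_polyC !rmorphD rmorphM rmorph1 /= map_polyC !map_polyXn.
  rewrite e /fac /uu -/i polyCD; ring.
rewrite mulrDr [X in eqm _ _ (_ + X)](_ : _ = ('X)%:P * ('X^i * lft (V i))); last by ring.
exact: eqm_refl.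
Qed.

Definition Lp := \prod_(i : 'I_N.+1 | odd i) (1 + ('X)%:P * lft (U i)).

Lemma L_eqm : eqm N.+1 Lp
  ((\prod_(0 <= j < N) lft (V j.*2.+1)) * PM uu N).
Proof.
apply: (@eqm_trans _ _ _ (\prod_(0 <= i < N.*2.+1 | odd i) Fl i)).
  rewrite /Lp -(big_mkord (fun i => odd i) Fl).
  rewrite [X in eqm _ _ X](big_cat_nat (n := N.+1)) //=; try lia.
  rewrite -{1}[\prod_(0 <= i < N.+1 | odd i) Fl i]mulr1; apply: eqm_mul => //.
  apply: eqm_sym; rewrite big_nat_cond; apply: eqm_prod1 => i /andP [/andP [h1 _] _].
  exact: Fl_big.
rewrite prod_odd /PM -(big_mkord xpredT (fac uu)) -big_split /=.
by apply: eqm_prod => j _; apply: Fl_fac.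
Qed.

Lemma Pp_eqm : eqm N.+1 (lft Pp)
  ((\prod_(0 <= j < N) lft (V j.*2.+1)) * (\prod_(0 <= j < N) lft (W j.+1))).
Proof.
rewrite -!rmorph_prod -rmorphM; apply: eqm_map.
apply: (@eqm_trans _ _ _ (\prod_(1 <= n < N.+1) (V (n.*2.-1) * W n))).
  by apply: eqm_prod => n _; apply: hPf.
by rewrite big_add1 /= -big_split.
Qed.

Lemma WQ_eqm : eqm N.+1 ((\prod_(0 <= j < N) lft (W j.+1)) * qpoch {poly rat} N) 1.
Proof.
rewrite /qpoch -(big_mkord xpredT (fun i => 1 - 'X^(i.+1.*2))) -big_split /=.
apply: eqm_prod1 => j _.
have -> : (1 - 'X^(j.+1.*2) : {poly {poly rat}}) = lft (1 - 'X^(j.+1.*2)).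
  by rewrite rmorphB rmorph1 /= map_polyXn.
by rewrite -rmorphM -(rmorph1 (map_poly (@polyC rat))); apply: eqm_map; apply: hW.
Qed.

Lemma QP_eqm : eqm N.+1 (qpoch {poly rat} N * PM uu N) Ss.
Proof. by move=> k hk; rewrite G_Sser ?coef_poly ?hk //; lia. Qed.

Lemma main_eqm : eqm N.+1 Lp (lft Pp * Ss).
Proof.
set A := \prod_(0 <= j < N) lft (V j.*2.+1).
set B := \prod_(0 <= j < N) lft (W j.+1).
apply: eqm_trans L_eqm _.
apply: (@eqm_trans _ _ _ (A * B * (qpoch {poly rat} N * PM uu N))); last first.
  by apply: eqm_mul; [apply: eqm_sym; apply: Pp_eqm | apply: QP_eqm].
have -> : A * B * (qpoch {poly rat} N * PM uu N) = A * (B * qpoch {poly rat} N) * PM uu N.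
  by ring.
rewrite -/A -{1}[A]mulr1; apply: eqm_mul => //; apply: eqm_mul => //.
by apply: eqm_sym; apply: WQ_eqm.
Qed.

End Main.

Unset Implicit Arguments.
Theorem mainTheorem1 (a : int) (ha : (-2 <= a <= 2)%R) (t N : nat) :
  Ucoef a t N = (rhs a N)`_t.
Proof.
by rewrite Ucoef_L rhs_coef -/(Lp a N) (@main_eqm a N N (ltnSn N)).
Qed.
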